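(* Let $k_0$ be a field with $\operatorname{char}k_0\neq3$. Let $T\subset E_6^{\mathrm{ad}}$ be a split maximal torus with root system $\Phi\subset X(T)$ and Weyl group $W$. There exists a surjective homomorphism $\varepsilon:X(T)\to\mathbb{F}_3^2$ such that $\varepsilon(\alpha)\neq0$ for all $\alpha\in\Phi$, $X(T)^{W(\varepsilon)_3}=\{0\}$ for a Sylow $3$-subgroup $W(\varepsilon)_3$ of $W(\varepsilon)$, and $\operatorname{Rank}(W(\varepsilon),X(T);3)\geq12$.
   Context: $E_6^{\mathrm{ad}}$ is the split adjoint group of type $E_6$ over $k_0$. $W(\varepsilon)=\{w\in W:\varepsilon(w.\chi)=\varepsilon(\chi)\ \forall\chi\in X(T)\}$. For a finite group $S$ acting on a finitely generated abelian group $\mathcal{U}$ with Sylow $p$-subgroup $S_p$, $\operatorname{Rank}(S,\mathcal{U};p)$ is the minimal size of an $S_p$-invariant subset of $\mathcal{U}$ generating a subgroup of finite index prime to $p$. *)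

(* Defs.v *)
From HB Require Import structures.
From mathcomp Require Import all_boot all_order all_algebra.
Set Implicit Arguments. Unset Strict Implicit. Unset Printing Implicit Defensive.
Import Order.TTheory GRing.Theory Num.Theory.
Local Open Scope ring_scope.

(* X(T) of the adjoint group is the root lattice; we use coordinates   *)
(* with respect to the simple roots alpha_0..alpha_5 (Bourbaki         *)
(* numbering 1..6 shifted by one: chain 1-3-4-5-6, node 2 attached to  *)
(* node 4).  Characters are row vectors 'rV[int]_6.                    *)

Definition charX := 'rV[int]_6.

Definition e6_edge (i j : 'I_6) : bool :=
  let a := nat_of_ord i in let b := nat_of_ord j in
  [|| (a == 0%N) && (b == 2%N), (a == 2%N) && (b == 0%N),
      (a == 2%N) && (b == 3%N), (a == 3%N) && (b == 2%N),
      (a == 3%N) && (b == 4%N), (a == 4%N) && (b == 3%N),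
      (a == 4%N) && (b == 5%N), (a == 5%N) && (b == 4%N),
      (a == 1%N) && (b == 3%N) | (a == 3%N) && (b == 1%N)].

Definition cartanE6 : 'M[int]_6 :=
  \matrix_(i, j) (if i == j then 2 else if e6_edge i j then -1 else 0).

Definition simple_root (i : 'I_6) : charX := delta_mx 0 i.

(* Simple reflection s_i acting on row vectors by right multiplication:
   v *m sref i = v - <v, alpha_i^vee> alpha_i. *)
Definition sref (i : 'I_6) : 'M[int]_6 :=
  1%:M - \matrix_(j, k) (cartanE6 j i * (k == i)%:R).

Definition act (w : 'M[int]_6) (x : charX) : charX := x *m w.

Definition inW (w : 'M[int]_6) : Prop :=
  exists s : seq 'I_6, w = \prod_(i <- s) sref i.

Definition is_root (a : charX) : Prop :=
  exists w i, inW w /\ a = act w (simple_root i).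

Definition Weps (eps : charX -> 'rV['F_3]_2) (w : 'M[int]_6) : Prop :=
  inW w /\ forall x : charX, eps (act w x) = eps x.

Definition has_card (G : 'M[int]_6 -> Prop) (n : nat) : Prop :=
  exists s : seq 'M[int]_6, [/\ uniq s, size s = n & forall x, G x <-> x \in s].

Definition is_subgroup (G P : 'M[int]_6 -> Prop) : Prop :=
  [/\ forall x, P x -> G x, P 1,
      forall x y, P x -> P y -> P (x * y)
    & forall x, P x -> exists y, P y /\ x * y = 1 /\ y * x = 1].

Definition is_Sylow (p : nat) (G P : 'M[int]_6 -> Prop) : Prop :=
  is_subgroup G P /\
  exists nG nP, [/\ has_card G nG, has_card P nP & nP = (nG`_p)%N].

Definition in_span (A : seq charX) (v : charX) : Prop :=
  exists c : 'I_(size A) -> int, v = \sum_(i < size A) (A`_i *~ c i).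

(* The subgroup generated by A has finite index, prime to p:
   s is a complete irredundant system of coset representatives of
   X(T) / <A>, and its size (the index) is coprime to p. *)
Definition finite_index_prime_to (A : seq charX) (p : nat) : Prop :=
  exists s : seq charX,
    [/\ uniq s,
        forall x : charX, exists2 r, r \in s & in_span A (x - r),
        forall r1 r2, r1 \in s -> r2 \in s -> in_span A (r1 - r2) -> r1 = r2
      & coprime (size s) p].

(* Rank(S, X(T); p) >= n : every S_p-invariant subset of X(T) generating
   a subgroup of finite index prime to p has at least n elements (for
   any Sylow p-subgroup S_p of S; all are conjugate).  Finite subsets are
   given as sequences; their cardinality is size (undup A).  Infinite
   subsets trivially have size >= n. *)
Definition Rank_ge (S : 'M[int]_6 -> Prop) (p n : nat) : Prop :=
  forall P, is_Sylow p S P ->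
  forall A : seq charX,
    (forall a w, a \in A -> P w -> act w a \in A) ->
    finite_index_prime_to A p ->
    (n <= size (undup A))%N.

(* Main.v *)
Require Import Defs.
From HB Require Import structures.
From mathcomp Require Import all_boot all_order all_algebra.
From mathcomp Require Import zify ring.
From Stdlib Require Import ClassicalEpsilon.
Import GRing.Theory.
Local Open Scope ring_scope.

Definition dot6 (a b : seq int) : int :=
  a`_0 * b`_0 + a`_1 * b`_1 + a`_2 * b`_2 + a`_3 * b`_3 + a`_4 * b`_4 + a`_5 * b`_5.
Definition colL (M : seq (seq int)) k := [seq r`_k | r <- M].
Definition vm (l : seq int) (M : seq (seq int)) := [seq dot6 l (colL M k) | k <- iota 0 6].
Definition Cl (i j : nat) : int :=
  if i == j then 2 else
  if [|| (i == 0%N) && (j == 2%N), (i == 2%N) && (j == 0%N),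
      (i == 2%N) && (j == 3%N), (i == 3%N) && (j == 2%N),
      (i == 3%N) && (j == 4%N), (i == 4%N) && (j == 3%N),
      (i == 4%N) && (j == 5%N), (i == 5%N) && (j == 4%N),
      (i == 1%N) && (j == 3%N) | (i == 3%N) && (j == 1%N)] then -1 else 0.
Definition srefL (j : nat) : seq (seq int) :=
  [seq [seq ((m == k)%:R - Cl m j * (k == j)%:R) | k <- iota 0 6] | m <- iota 0 6].
Definition Cm : seq (seq int) := [seq [seq Cl i j | j <- iota 0 6] | i <- iota 0 6].
Definition gram (l m : seq int) : int := dot6 (vm l Cm) m.
Definition step (l : seq int) (j : nat) := vm l (srefL j).
Definition unitL (k : nat) : seq int := [seq (k == m)%:R | m <- iota 0 6].
Definition fL (j : nat) (l : seq int) : int :=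
  if j == 0%N then l`_3 else l`_0 + l`_1 + l`_2 + l`_4 + l`_5.
Definition vL : seq int := [:: 1; 0; 2; 0; 1; 2].

Definition Rl : seq (seq int) := [:: [:: Negz 0; Negz 1; Negz 1; Negz 2; Negz 1; Negz 0];
  [:: Negz 0; Negz 0; Negz 1; Negz 2; Negz 1; Negz 0];
  [:: Negz 0; Negz 0; Negz 1; Negz 1; Negz 1; Negz 0];
  [:: Negz 0; Negz 0; Negz 1; Negz 1; Negz 0; Negz 0];
  [:: Negz 0; Negz 0; Negz 1; Negz 1; Negz 0; Posz 0];
  [:: Negz 0; Negz 0; Negz 0; Negz 1; Negz 1; Negz 0];
  [:: Negz 0; Negz 0; Negz 0; Negz 1; Negz 0; Negz 0];
  [:: Negz 0; Negz 0; Negz 0; Negz 1; Negz 0; Posz 0];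
  [:: Negz 0; Negz 0; Negz 0; Negz 0; Negz 0; Negz 0];
  [:: Negz 0; Negz 0; Negz 0; Negz 0; Negz 0; Posz 0];
  [:: Negz 0; Negz 0; Negz 0; Negz 0; Posz 0; Posz 0];
  [:: Negz 0; Posz 0; Negz 0; Negz 0; Negz 0; Negz 0];
  [:: Negz 0; Posz 0; Negz 0; Negz 0; Negz 0; Posz 0];
  [:: Negz 0; Posz 0; Negz 0; Negz 0; Posz 0; Posz 0];
  [:: Negz 0; Posz 0; Negz 0; Posz 0; Posz 0; Posz 0];
  [:: Negz 0; Posz 0; Posz 0; Posz 0; Posz 0; Posz 0];
  [:: Posz 0; Negz 0; Negz 0; Negz 1; Negz 1; Negz 0];
  [:: Posz 0; Negz 0; Negz 0; Negz 1; Negz 0; Negz 0];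
  [:: Posz 0; Negz 0; Negz 0; Negz 1; Negz 0; Posz 0];
  [:: Posz 0; Negz 0; Negz 0; Negz 0; Negz 0; Negz 0];
  [:: Posz 0; Negz 0; Negz 0; Negz 0; Negz 0; Posz 0];
  [:: Posz 0; Negz 0; Negz 0; Negz 0; Posz 0; Posz 0];
  [:: Posz 0; Negz 0; Posz 0; Negz 0; Negz 0; Negz 0];
  [:: Posz 0; Negz 0; Posz 0; Negz 0; Negz 0; Posz 0];
  [:: Posz 0; Negz 0; Posz 0; Negz 0; Posz 0; Posz 0];
  [:: Posz 0; Negz 0; Posz 0; Posz 0; Posz 0; Posz 0];
  [:: Posz 0; Posz 0; Negz 0; Negz 0; Negz 0; Negz 0];
  [:: Posz 0; Posz 0; Negz 0; Negz 0; Negz 0; Posz 0];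
  [:: Posz 0; Posz 0; Negz 0; Negz 0; Posz 0; Posz 0];
  [:: Posz 0; Posz 0; Negz 0; Posz 0; Posz 0; Posz 0];
  [:: Posz 0; Posz 0; Posz 0; Negz 0; Negz 0; Negz 0];
  [:: Posz 0; Posz 0; Posz 0; Negz 0; Negz 0; Posz 0];
  [:: Posz 0; Posz 0; Posz 0; Negz 0; Posz 0; Posz 0];
  [:: Posz 0; Posz 0; Posz 0; Posz 0; Negz 0; Negz 0];
  [:: Posz 0; Posz 0; Posz 0; Posz 0; Negz 0; Posz 0];
  [:: Posz 0; Posz 0; Posz 0; Posz 0; Posz 0; Negz 0];
  [:: Posz 0; Posz 0; Posz 0; Posz 0; Posz 0; Posz 1];
  [:: Posz 0; Posz 0; Posz 0; Posz 0; Posz 1; Posz 0];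
  [:: Posz 0; Posz 0; Posz 0; Posz 0; Posz 1; Posz 1];
  [:: Posz 0; Posz 0; Posz 0; Posz 1; Posz 0; Posz 0];
  [:: Posz 0; Posz 0; Posz 0; Posz 1; Posz 1; Posz 0];
  [:: Posz 0; Posz 0; Posz 0; Posz 1; Posz 1; Posz 1];
  [:: Posz 0; Posz 0; Posz 1; Posz 0; Posz 0; Posz 0];
  [:: Posz 0; Posz 0; Posz 1; Posz 1; Posz 0; Posz 0];
  [:: Posz 0; Posz 0; Posz 1; Posz 1; Posz 1; Posz 0];
  [:: Posz 0; Posz 0; Posz 1; Posz 1; Posz 1; Posz 1];
  [:: Posz 0; Posz 1; Posz 0; Posz 0; Posz 0; Posz 0];
  [:: Posz 0; Posz 1; Posz 0; Posz 1; Posz 0; Posz 0];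
  [:: Posz 0; Posz 1; Posz 0; Posz 1; Posz 1; Posz 0];
  [:: Posz 0; Posz 1; Posz 0; Posz 1; Posz 1; Posz 1];
  [:: Posz 0; Posz 1; Posz 1; Posz 1; Posz 0; Posz 0];
  [:: Posz 0; Posz 1; Posz 1; Posz 1; Posz 1; Posz 0];
  [:: Posz 0; Posz 1; Posz 1; Posz 1; Posz 1; Posz 1];
  [:: Posz 0; Posz 1; Posz 1; Posz 2; Posz 1; Posz 0];
  [:: Posz 0; Posz 1; Posz 1; Posz 2; Posz 1; Posz 1];
  [:: Posz 0; Posz 1; Posz 1; Posz 2; Posz 2; Posz 1];
  [:: Posz 1; Posz 0; Posz 0; Posz 0; Posz 0; Posz 0];
  [:: Posz 1; Posz 0; Posz 1; Posz 0; Posz 0; Posz 0];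
  [:: Posz 1; Posz 0; Posz 1; Posz 1; Posz 0; Posz 0];
  [:: Posz 1; Posz 0; Posz 1; Posz 1; Posz 1; Posz 0];
  [:: Posz 1; Posz 0; Posz 1; Posz 1; Posz 1; Posz 1];
  [:: Posz 1; Posz 1; Posz 1; Posz 1; Posz 0; Posz 0];
  [:: Posz 1; Posz 1; Posz 1; Posz 1; Posz 1; Posz 0];
  [:: Posz 1; Posz 1; Posz 1; Posz 1; Posz 1; Posz 1];
  [:: Posz 1; Posz 1; Posz 1; Posz 2; Posz 1; Posz 0];
  [:: Posz 1; Posz 1; Posz 1; Posz 2; Posz 1; Posz 1];
  [:: Posz 1; Posz 1; Posz 1; Posz 2; Posz 2; Posz 1];
  [:: Posz 1; Posz 1; Posz 2; Posz 2; Posz 1; Posz 0];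
  [:: Posz 1; Posz 1; Posz 2; Posz 2; Posz 1; Posz 1];
  [:: Posz 1; Posz 1; Posz 2; Posz 2; Posz 2; Posz 1];
  [:: Posz 1; Posz 1; Posz 2; Posz 3; Posz 2; Posz 1];
  [:: Posz 1; Posz 2; Posz 2; Posz 3; Posz 2; Posz 1]].
Definition words : seq (seq nat) := [:: [:: 0%N; 1%N; 2%N; 3%N; 1%N; 4%N; 3%N; 2%N; 0%N; 5%N; 4%N; 3%N; 1%N; 2%N; 0%N; 3%N; 2%N; 4%N];
  [:: 0%N; 2%N; 3%N; 1%N; 4%N; 3%N; 1%N; 2%N; 0%N; 5%N; 4%N; 3%N; 1%N; 2%N; 0%N; 3%N];
  [:: 0%N; 2%N; 3%N; 1%N; 4%N; 3%N; 2%N; 0%N; 5%N; 4%N; 3%N; 1%N; 2%N; 3%N; 4%N; 5%N];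
  [:: 0%N; 1%N; 2%N; 3%N; 2%N; 0%N; 4%N; 3%N; 1%N; 2%N; 3%N; 4%N; 5%N; 4%N; 3%N; 1%N; 2%N; 0%N; 3%N; 2%N; 4%N; 3%N; 5%N; 4%N];
  [:: 0%N; 2%N; 4%N; 5%N];
  [:: 0%N; 2%N; 3%N; 2%N; 0%N; 4%N; 3%N; 1%N; 2%N; 3%N; 4%N; 5%N; 4%N; 3%N; 1%N; 2%N; 0%N; 3%N; 2%N; 4%N; 3%N; 1%N];
  [:: 0%N; 1%N; 2%N; 5%N; 4%N; 3%N; 1%N; 2%N; 0%N; 3%N; 2%N; 4%N; 3%N; 1%N; 5%N; 4%N; 3%N; 2%N];
  [:: 0%N; 2%N; 3%N; 1%N; 2%N; 0%N; 3%N; 2%N; 4%N; 3%N; 1%N; 5%N; 4%N; 3%N; 2%N; 0%N];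
  [:: 0%N; 2%N; 4%N; 3%N; 1%N; 2%N; 0%N; 3%N; 2%N; 4%N; 3%N; 1%N; 5%N; 4%N; 3%N; 1%N];
  [:: 1%N; 4%N; 3%N; 1%N; 2%N; 0%N; 3%N; 2%N; 4%N; 3%N; 1%N; 5%N; 4%N; 3%N; 1%N; 2%N];
  [:: 5%N; 4%N; 3%N; 1%N; 2%N; 0%N; 3%N; 2%N; 4%N; 3%N; 1%N; 5%N; 4%N; 3%N; 2%N; 0%N];
  [:: 3%N; 1%N; 2%N; 0%N; 3%N; 2%N; 4%N; 3%N; 1%N; 5%N; 4%N; 3%N];
  [:: 1%N; 2%N; 0%N; 3%N; 1%N; 2%N; 0%N; 3%N; 2%N; 4%N; 3%N; 1%N; 5%N; 4%N; 3%N; 2%N];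
  [:: 2%N; 0%N; 4%N; 3%N; 1%N; 2%N; 0%N; 3%N; 2%N; 4%N; 3%N; 1%N; 5%N; 4%N; 3%N; 1%N; 2%N; 0%N];
  [:: 2%N; 0%N; 5%N; 4%N; 3%N; 1%N; 2%N; 0%N; 3%N; 2%N; 4%N; 3%N; 1%N; 5%N; 4%N; 3%N];
  [:: 1%N; 2%N; 0%N; 3%N; 2%N; 0%N; 4%N; 3%N; 1%N; 2%N; 3%N; 4%N; 5%N; 4%N; 3%N; 1%N; 2%N; 0%N; 3%N; 2%N; 4%N; 3%N];
  [:: 2%N; 0%N; 5%N; 4%N];
  [:: 2%N; 0%N; 3%N; 2%N; 0%N; 4%N; 3%N; 1%N; 2%N; 0%N; 3%N; 4%N; 5%N; 4%N; 3%N; 1%N; 2%N; 0%N; 3%N; 2%N; 4%N; 3%N; 1%N; 5%N];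
  [:: 1%N; 3%N; 1%N; 4%N; 3%N; 1%N; 2%N; 0%N; 5%N; 4%N; 3%N; 1%N; 2%N; 0%N; 3%N; 4%N];
  [:: 3%N; 1%N; 4%N; 3%N; 2%N; 0%N; 5%N; 4%N; 3%N; 1%N; 2%N; 3%N];
  [:: 3%N; 1%N; 4%N; 3%N; 2%N; 0%N; 5%N; 4%N; 3%N; 1%N; 2%N; 0%N; 3%N; 2%N; 4%N; 5%N];
  [:: 1%N; 3%N; 2%N; 0%N; 4%N; 3%N; 1%N; 2%N; 0%N; 3%N; 4%N; 5%N; 4%N; 3%N; 1%N; 2%N; 0%N; 3%N; 2%N; 4%N; 3%N; 5%N];
  [:: ];
  [:: 3%N; 2%N; 0%N; 4%N; 3%N; 1%N; 2%N; 3%N; 4%N; 5%N; 4%N; 3%N; 1%N; 2%N; 0%N; 3%N; 2%N; 4%N; 3%N; 1%N; 5%N; 4%N];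
  [:: 1%N; 2%N; 0%N; 3%N; 1%N; 4%N; 3%N; 2%N; 0%N; 5%N; 4%N; 3%N; 1%N; 2%N; 3%N; 4%N];
  [:: 2%N; 0%N; 3%N; 1%N; 4%N; 3%N; 2%N; 0%N; 5%N; 4%N; 3%N; 1%N; 2%N; 0%N; 3%N; 2%N];
  [:: 2%N; 0%N; 3%N; 1%N; 4%N; 3%N; 1%N; 2%N; 0%N; 5%N; 4%N; 3%N; 1%N; 2%N; 0%N; 3%N; 4%N; 5%N]].
Definition G1 : seq (seq int) := [:: [:: Negz 0; Negz 1; Negz 1; Negz 2; Negz 1; Negz 0];
    [:: Posz 0; Posz 0; Posz 0; Posz 0; Negz 0; Negz 0];
    [:: Posz 0; Posz 1; Posz 0; Posz 0; Posz 0; Posz 0];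
    [:: Posz 0; Posz 0; Posz 1; Posz 1; Posz 1; Posz 1];
    [:: Posz 1; Posz 0; Posz 0; Posz 0; Posz 0; Posz 0];
    [:: Negz 0; Posz 0; Negz 0; Posz 0; Posz 0; Posz 0]].
Definition G2 : seq (seq int) := [:: [:: Negz 0; Negz 1; Negz 1; Negz 2; Negz 1; Negz 0];
    [:: Posz 0; Posz 0; Posz 0; Posz 0; Posz 0; Posz 1];
    [:: Posz 0; Posz 1; Posz 0; Posz 0; Posz 0; Posz 0];
    [:: Posz 1; Posz 0; Posz 1; Posz 1; Posz 1; Posz 0];
    [:: Negz 0; Posz 0; Negz 0; Posz 0; Posz 0; Posz 0];
    [:: Posz 0; Posz 0; Posz 1; Posz 0; Posz 0; Posz 0]].
Definition K1_0 : seq (seq int) := [:: [:: Negz 0; Negz 1; Negz 1; Negz 2; Negz 1; Negz 0];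
    [:: Posz 0; Posz 0; Posz 0; Posz 0; Negz 0; Negz 0];
    [:: Posz 0; Posz 1; Posz 0; Posz 0; Posz 0; Posz 0];
    [:: Posz 0; Posz 0; Posz 1; Posz 1; Posz 1; Posz 1];
    [:: Posz 1; Posz 0; Posz 0; Posz 0; Posz 0; Posz 0];
    [:: Negz 0; Posz 0; Negz 0; Posz 0; Posz 0; Posz 0]].
Definition K1_1 : seq (seq int) := [:: [:: Negz 0; Negz 1; Negz 1; Negz 2; Negz 1; Negz 0];
    [:: Posz 0; Posz 0; Posz 0; Posz 0; Posz 0; Posz 1];
    [:: Posz 0; Posz 1; Posz 0; Posz 0; Posz 0; Posz 0];
    [:: Posz 1; Posz 0; Posz 1; Posz 1; Posz 1; Posz 0];
    [:: Negz 0; Posz 0; Negz 0; Posz 0; Posz 0; Posz 0];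
    [:: Posz 0; Posz 0; Posz 1; Posz 0; Posz 0; Posz 0]].
Definition K1_2 : seq (seq int) := [:: [:: Negz 0; Negz 1; Negz 1; Negz 2; Negz 1; Negz 0];
    [:: Posz 0; Posz 0; Posz 0; Posz 0; Posz 1; Posz 0];
    [:: Posz 0; Posz 1; Posz 0; Posz 0; Posz 0; Posz 0];
    [:: Posz 0; Posz 0; Posz 0; Posz 1; Posz 0; Posz 0];
    [:: Posz 0; Posz 0; Posz 1; Posz 0; Posz 0; Posz 0];
    [:: Posz 1; Posz 0; Posz 0; Posz 0; Posz 0; Posz 0]].
Definition K1_3 : seq (seq int) := [:: [:: Posz 0; Posz 1; Posz 0; Posz 0; Posz 0; Posz 0];
    [:: Posz 0; Posz 0; Posz 0; Posz 0; Negz 0; Negz 0];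
    [:: Posz 1; Posz 1; Posz 2; Posz 3; Posz 2; Posz 1];
    [:: Posz 0; Negz 0; Negz 0; Negz 1; Negz 0; Posz 0];
    [:: Negz 0; Posz 0; Negz 0; Posz 0; Posz 0; Posz 0];
    [:: Posz 0; Posz 0; Posz 1; Posz 0; Posz 0; Posz 0]].
Definition K1_4 : seq (seq int) := [:: [:: Posz 0; Posz 1; Posz 0; Posz 0; Posz 0; Posz 0];
    [:: Posz 0; Posz 0; Posz 0; Posz 0; Posz 0; Posz 1];
    [:: Posz 1; Posz 1; Posz 2; Posz 3; Posz 2; Posz 1];
    [:: Negz 0; Negz 0; Negz 1; Negz 1; Negz 0; Negz 0];
    [:: Posz 0; Posz 0; Posz 1; Posz 0; Posz 0; Posz 0];
    [:: Posz 1; Posz 0; Posz 0; Posz 0; Posz 0; Posz 0]].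
Definition K1_5 : seq (seq int) := [:: [:: Posz 0; Posz 1; Posz 0; Posz 0; Posz 0; Posz 0];
    [:: Posz 0; Posz 0; Posz 0; Posz 0; Posz 1; Posz 0];
    [:: Posz 1; Posz 1; Posz 2; Posz 3; Posz 2; Posz 1];
    [:: Negz 0; Negz 0; Negz 0; Negz 1; Negz 1; Negz 0];
    [:: Posz 1; Posz 0; Posz 0; Posz 0; Posz 0; Posz 0];
    [:: Negz 0; Posz 0; Negz 0; Posz 0; Posz 0; Posz 0]].
Definition K2_0 : seq (seq int) := [:: [:: Negz 0; Negz 1; Negz 1; Negz 2; Negz 1; Negz 0];
    [:: Posz 0; Posz 0; Posz 0; Posz 0; Negz 0; Negz 0];
    [:: Posz 0; Posz 1; Posz 0; Posz 0; Posz 0; Posz 0];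
    [:: Posz 0; Posz 0; Posz 1; Posz 1; Posz 1; Posz 1];
    [:: Posz 1; Posz 0; Posz 0; Posz 0; Posz 0; Posz 0];
    [:: Negz 0; Posz 0; Negz 0; Posz 0; Posz 0; Posz 0]].
Definition K2_1 : seq (seq int) := [:: [:: Negz 0; Posz 0; Negz 0; Posz 0; Posz 0; Posz 0];
    [:: Negz 0; Negz 1; Negz 1; Negz 2; Negz 1; Negz 0];
    [:: Posz 1; Posz 0; Posz 0; Posz 0; Posz 0; Posz 0];
    [:: Posz 0; Posz 1; Posz 1; Posz 1; Posz 1; Posz 0];
    [:: Posz 0; Posz 0; Posz 0; Posz 0; Posz 0; Posz 1];
    [:: Posz 0; Posz 0; Posz 0; Posz 0; Negz 0; Negz 0]].
Definition K2_2 : seq (seq int) := [:: [:: Posz 0; Posz 0; Posz 0; Posz 0; Negz 0; Negz 0];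
    [:: Negz 0; Posz 0; Negz 0; Posz 0; Posz 0; Posz 0];
    [:: Posz 0; Posz 0; Posz 0; Posz 0; Posz 0; Posz 1];
    [:: Posz 1; Posz 0; Posz 1; Posz 1; Posz 1; Posz 0];
    [:: Posz 0; Posz 1; Posz 0; Posz 0; Posz 0; Posz 0];
    [:: Negz 0; Negz 1; Negz 1; Negz 2; Negz 1; Negz 0]].
Definition K2_3 : seq (seq int) := [:: [:: Posz 0; Posz 0; Posz 0; Posz 0; Posz 0; Posz 1];
    [:: Posz 1; Posz 0; Posz 0; Posz 0; Posz 0; Posz 0];
    [:: Posz 0; Posz 0; Posz 0; Posz 0; Posz 1; Posz 0];
    [:: Negz 0; Negz 0; Negz 0; Negz 1; Negz 1; Negz 0];
    [:: Posz 1; Posz 1; Posz 2; Posz 3; Posz 2; Posz 1];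
    [:: Posz 0; Posz 1; Posz 0; Posz 0; Posz 0; Posz 0]].
Definition K2_4 : seq (seq int) := [:: [:: Posz 0; Posz 0; Posz 0; Posz 0; Posz 1; Posz 0];
    [:: Posz 0; Posz 0; Posz 1; Posz 0; Posz 0; Posz 0];
    [:: Posz 0; Posz 0; Posz 0; Posz 0; Negz 0; Negz 0];
    [:: Posz 0; Posz 1; Posz 0; Posz 1; Posz 1; Posz 1];
    [:: Negz 0; Negz 1; Negz 1; Negz 2; Negz 1; Negz 0];
    [:: Posz 1; Posz 1; Posz 2; Posz 3; Posz 2; Posz 1]].
Definition K2_5 : seq (seq int) := [:: [:: Posz 0; Posz 0; Posz 1; Posz 0; Posz 0; Posz 0];
    [:: Posz 1; Posz 1; Posz 2; Posz 3; Posz 2; Posz 1];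
    [:: Negz 0; Posz 0; Negz 0; Posz 0; Posz 0; Posz 0];
    [:: Posz 0; Negz 0; Negz 0; Negz 1; Negz 0; Posz 0];
    [:: Posz 0; Posz 0; Posz 0; Posz 0; Negz 0; Negz 0];
    [:: Posz 0; Posz 0; Posz 0; Posz 0; Posz 1; Posz 0]].

Definition o0 : 'I_6 := @Ordinal 6 0 isT.
Definition o1 : 'I_6 := @Ordinal 6 1 isT.
Definition o2 : 'I_6 := @Ordinal 6 2 isT.
Definition o3 : 'I_6 := @Ordinal 6 3 isT.
Definition o4 : 'I_6 := @Ordinal 6 4 isT.
Definition o5 : 'I_6 := @Ordinal 6 5 isT.
Definition ords := [:: o0; o1; o2; o3; o4; o5].

Lemma ord6P (P : 'I_6 -> Prop) : P o0 -> P o1 -> P o2 -> P o3 -> P o4 -> P o5 -> forall j, P j.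
Proof.
move=> H0 H1 H2 H3 H4 H5 [m Hm].
do 6? [case: m Hm => [|m] Hm; first by
  match goal with |- P (Ordinal ?H) => rewrite (bool_irrelevance H isT) end].
by [].
Qed.

Lemma sum6 (F : 'I_6 -> int) : \sum_(j < 6) F j = F o0 + F o1 + F o2 + F o3 + F o4 + F o5.
Proof.
rewrite !big_ord_recl big_ord0 addr0 !addrA.
by congr (_ + _ + _ + _ + _ + _); congr F; apply: val_inj.
Qed.

Definition rowl (x : charX) : seq int := [seq x 0 j | j <- ords].
Definition rowsl (w : 'M[int]_6) : seq (seq int) := [seq [seq w i j | j <- ords] | i <- ords].
Definition mxL (L : seq (seq int)) : 'M[int]_6 := \matrix_(i, j) (nth [::] L i)`_j.
Definition shape6 (L : seq (seq int)) : seq (seq int) :=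
  [seq [seq (nth [::] L i)`_j | j <- iota 0 6] | i <- iota 0 6].

Lemma mulE n (x : charX) (w : 'M[int]_(6, n)) j :
  (x *m w) 0 j = x 0 o0 * w o0 j + x 0 o1 * w o1 j + x 0 o2 * w o2 j
               + x 0 o3 * w o3 j + x 0 o4 * w o4 j + x 0 o5 * w o5 j.
Proof. by rewrite mxE sum6. Qed.

Lemma rowl_mul x w : rowl (x *m w) = vm (rowl x) (rowsl w).
Proof. by rewrite /rowl /= !mulE. Qed.

Lemma nth_rowl x (j : 'I_6) : (rowl x)`_j = x 0 j.
Proof. by elim/ord6P: j. Qed.

Lemma nth_rowsl w (i j : 'I_6) : (nth [::] (rowsl w) i)`_j = w i j.
Proof. by elim/ord6P: i; elim/ord6P: j. Qed.

Lemma rowl_inj : injective rowl.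
Proof. by move=> x y H; apply/rowP => j; rewrite -!nth_rowl H. Qed.

Lemma rowsl_inj : injective rowsl.
Proof. by move=> x y H; apply/matrixP => i j; rewrite -!nth_rowsl H. Qed.

Lemma rowsl_mxL L : rowsl (mxL L) = shape6 L.
Proof. by rewrite /rowsl /= !mxE. Qed.

Lemma mxL_rowsl w : mxL (rowsl w) = w.
Proof. by apply/matrixP => i j; rewrite mxE nth_rowsl. Qed.

Lemma rowsl_sref j : rowsl (sref j) = srefL j.
Proof. by elim/ord6P: j; rewrite /rowsl /sref /= !mxE /=. Qed.

Definition okk (k : nat) (p : seq (seq int)) (r : seq int) : bool :=
  [&& ((fL 0 r - fL 0 (unitL k)) %% 3 == 0)%Z, ((fL 1 r - fL 1 (unitL k)) %% 3 == 0)%Z &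
      all (fun i => gram (nth [::] p i) r == Cl i k) (iota 0 k)].
Definition extS (ps : seq (seq (seq int))) (k : nat) :=
  [seq rcons p r | p <- ps, r <- [seq r <- Rl | okk k p r]].
Fixpoint extk (n : nat) : seq (seq (seq int)) :=
  match n with 0 => [:: [::]] | n'.+1 => extS (extk n') n' end.
Definition sols0 := extk 6.
Definition vok (L : seq (seq int)) :=
  all (fun k => (((vm vL L)`_k - vL`_k) %% 3 == 0)%Z) (iota 0 6).
Definition sols := [seq L <- sols0 | vok L].
Definition rows_of_word (s : seq nat) := [seq foldl step (unitL i) s | i <- iota 0 6].

Lemma sols_size : size sols = 27%N.
Proof. by vm_compute. Qed.
Lemma sols_uniq : uniq sols.
Proof. by vm_compute. Qed.
Lemma sols_shape : all (fun L => shape6 L == L) sols.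
Proof. by vm_compute. Qed.
Lemma Rl_closed : all (fun l => all (fun j => step l j \in Rl) (iota 0 6)) Rl.
Proof. by vm_compute. Qed.
Lemma gram_inv_comp : all (fun l => all (fun m => all (fun j =>
   gram (step l j) (step m j) == gram l m) (iota 0 6)) Rl) Rl.
Proof. by vm_compute. Qed.
Lemma words_ok : map rows_of_word words == sols.
Proof. by vm_compute. Qed.
Lemma words_small : all (fun s => all (fun j => j < 6)%N s) words.
Proof. by vm_compute. Qed.
Lemma eps_roots : all (fun l => ((fL 0 l %% 3 != 0) || (fL 1 l %% 3 != 0))%Z) Rl.
Proof. by vm_compute. Qed.
Lemma units_in : all (fun k => unitL k \in Rl) (iota 0 6).
Proof. by vm_compute. Qed.
Lemma gram_units : all (fun i => all (fun k => gram (unitL i) (unitL k) == Cl i k) (iota 0 6)) (iota 0 6).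
Proof. by vm_compute. Qed.
Lemma v_sref : all (fun a => all (fun k => (((vm vL (srefL a))`_k - vL`_k) %% 3 == 0)%Z) (iota 0 6)) (iota 0 6).
Proof. by vm_compute. Qed.
Lemma sols_eps : all (fun L => all (fun i => all (fun j =>
  ((fL j (nth [::] L i) - fL j (unitL i)) %% 3 == 0)%Z) (iota 0 2)) (iota 0 6)) sols.
Proof. by vm_compute. Qed.
Lemma gens_in : all (fun L => L \in sols) [:: G1; G2; K1_0; K1_1; K1_2; K1_3; K1_4; K1_5; K2_0; K2_1; K2_2; K2_3; K2_4; K2_5].
Proof. by vm_compute. Qed.


Lemma solsE : sols = [seq L <- sols0 | vok L]. Proof. by []. Qed.
Lemma sols0E : sols0 = extk 6. Proof. by []. Qed.
Opaque sols sols0.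
Definition stp (l : seq int) (j : 'I_6) := step l j.

Lemma rowl_prod (s : seq 'I_6) (x : charX) :
  rowl (x *m \prod_(j <- s) sref j) = foldl stp (rowl x) s.
Proof.
elim: s x => [|a s IH] x; first by rewrite big_nil mulmx1.
by rewrite big_cons -mulmxE mulmxA IH /= rowl_mul rowsl_sref.
Qed.

Lemma rowl_delta (i : 'I_6) : rowl (delta_mx 0 i) = unitL i.
Proof. by elim/ord6P: i; rewrite /rowl /= !mxE. Qed.

Lemma rowl_delta_mul (i : 'I_6) w : rowl (delta_mx 0 i *m w) = nth [::] (rowsl w) i.
Proof. by rewrite -rowE; elim/ord6P: i; rewrite /rowl /rowsl /= !mxE. Qed.

Lemma rowsl_prod s : rowsl (\prod_(j <- s) sref j) = [seq foldl stp (unitL i) s | i <- iota 0 6].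
Proof.
set w := \prod_(j <- s) sref j.
have E (i : 'I_6) : [seq w i j | j <- ords] = foldl stp (unitL i) s.
  rewrite -rowl_delta -rowl_prod rowl_delta_mul; elim/ord6P: i => //.
by rewrite /rowsl (eq_map E).
Qed.

Lemma fold_Rl s l : l \in Rl -> foldl stp l s \in Rl.
Proof.
elim: s l => //= a s IH l Hl; apply: IH.
by have /allP := allP Rl_closed l Hl; apply; rewrite mem_iota /=.
Qed.

Lemma fold_gram s l m : l \in Rl -> m \in Rl ->
  gram (foldl stp l s) (foldl stp m s) = gram l m.
Proof.
elim: s l m => //= a s IH l m Hl Hm.
have Sl : stp l a \in Rl by have /allP := allP Rl_closed l Hl; apply; rewrite mem_iota /=.
have Sm : stp m a \in Rl by have /allP := allP Rl_closed m Hm; apply; rewrite mem_iota /=.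
rewrite IH //; apply/eqP.
have /allP := allP gram_inv_comp l Hl.
by move=> /(_ m Hm) /allP; apply; rewrite mem_iota /=.
Qed.

Lemma unit_in (i : nat) : (i < 6)%N -> unitL i \in Rl.
Proof. by move=> Hi; apply: (allP units_in); rewrite mem_iota. Qed.

Lemma Fp3_0 (z : int) : ((z%:~R : 'F_3) == 0) = (z %% 3 == 0)%Z.
Proof.
rewrite -(dvdz_pcharf (pchar_Fp (isT : prime 3))).
by apply/idP/idP => [/dvdz_mod0P -> // | /eqP /dvdz_mod0P].
Qed.

Lemma Fp3_eq (a b : int) : ((a%:~R : 'F_3) == b%:~R) = ((a - b) %% 3 == 0)%Z.
Proof. by rewrite -Fp3_0 intrB subr_eq0. Qed.

Definition Fm : 'M[int]_(6,2) :=
  \matrix_(k, j) (if (j : nat) == 0%N then ((k : nat) == 3%N)%:R else ((k : nat) != 3%N)%:R).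
Definition epsf (x : 'rV[int]_6) : 'rV['F_3]_2 := map_mx (fun z : int => z%:~R) (x *m Fm).
Lemma epsf_sub : {morph epsf : x y / x - y}.
Proof. by move=> x y; apply/matrixP => i j; rewrite /epsf mulmxBl !mxE intrB. Qed.
HB.instance Definition _ := GRing.isZmodMorphism.Build 'rV[int]_6 'rV['F_3]_2 epsf epsf_sub.
Definition eps : {additive 'rV[int]_6 -> 'rV['F_3]_2} := epsf.

Lemma FmE (x : charX) (j : 'I_2) : (x *m Fm) 0 j = fL j (rowl x).
Proof.
rewrite mulE !mxE.
case: j => [[|[|//]] Hj] /=; rewrite /fL /rowl /=; lia.
Qed.

Lemma epsE x : eps x = epsf x. Proof. by []. Qed.

Lemma eps_entry (x : charX) (j : 'I_2) : epsf x 0 j = (fL j (rowl x))%:~R.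
Proof. by rewrite mxE FmE. Qed.

Lemma eps_eqP x y : epsf x = epsf y ->
  forall j : 'I_2, ((fL j (rowl x) - fL j (rowl y)) %% 3 == 0)%Z.
Proof. by move=> H j; rewrite -Fp3_eq -!eps_entry H. Qed.

Lemma eps_eqI x y : (forall j : 'I_2, ((fL j (rowl x) - fL j (rowl y)) %% 3 == 0)%Z) ->
  epsf x = epsf y.
Proof. by move=> H; apply/rowP => j; rewrite !eps_entry; apply/eqP; rewrite Fp3_eq H. Qed.

Definition vM : charX := \row_k vL`_k.
Lemma rowl_vM : rowl vM = vL. Proof. by rewrite /rowl /= !mxE. Qed.
Definition m3 (x : charX) : 'rV['F_3]_6 := map_mx (@intmul 'F_3 1) x.

Lemma m3E x k : m3 x 0 k = (x 0 k)%:~R. Proof. by rewrite mxE. Qed.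

Lemma m3_sref (a : 'I_6) : m3 (vM *m sref a) = m3 vM.
Proof.
apply/rowP => k; rewrite !m3E -nth_rowl rowl_mul rowsl_sref rowl_vM.
have -> : vM 0 k = vL`_k by rewrite mxE.
apply/eqP; rewrite Fp3_eq.
have Ha : (a : nat) \in iota 0 6 by rewrite mem_iota /=.
have /allP := allP v_sref a Ha.
by apply; rewrite mem_iota /=.
Qed.

Lemma m3_prod (s : seq 'I_6) u : m3 u = m3 vM -> m3 (u *m \prod_(j <- s) sref j) = m3 vM.
Proof.
elim: s u => [|a s IH] u Hu; first by rewrite big_nil mulmx1.
rewrite big_cons -mulmxE mulmxA; apply: IH.
by rewrite /m3 map_mxM -/(m3 u) Hu /m3 -map_mxM; exact: m3_sref.
Qed.

Lemma v_inv w : inW w -> vok (rowsl w).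
Proof.
case=> s ->; rewrite /vok; apply/allP => k; rewrite mem_iota => /andP [_ Hk].
have := @m3_prod s vM (erefl (m3 vM)).
move/rowP/(_ (Ordinal Hk)); rewrite !m3E => /eqP; rewrite Fp3_eq.
rewrite -(nth_rowl _ (Ordinal Hk)) -(nth_rowl vM (Ordinal Hk)) /=.
by rewrite rowl_mul rowl_vM.
Qed.

Lemma nth_rows (s : seq 'I_6) k : (k < 6)%N ->
  nth [::] [seq foldl stp (unitL i) s | i <- iota 0 6] k = foldl stp (unitL k) s.
Proof. by move=> Hk; rewrite (nth_map 0%N) ?size_iota // nth_iota. Qed.

Lemma mem_extS ps k p r : p \in ps -> r \in Rl -> okk k p r -> rcons p r \in extS ps k.
Proof.
move=> Hp Hr Ho; rewrite /extS.
apply: (allpairs_f_dep (fun p r => rcons p r)) => //.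
by rewrite mem_filter Ho.
Qed.

Lemma Weps_sols w : Weps eps w -> rowsl w \in sols.
Proof.
case=> [[s Ew] He].
have HR : rowsl w = [seq foldl stp (unitL i) s | i <- iota 0 6] by rewrite Ew rowsl_prod.
have sizeR : size (rowsl w) = 6%N by [].
have Rin k : (k < 6)%N -> nth [::] (rowsl w) k \in Rl.
  by move=> Hk; rewrite HR nth_rows // fold_Rl // unit_in.
have Rgram i k : (i < 6)%N -> (k < 6)%N ->
    gram (nth [::] (rowsl w) i) (nth [::] (rowsl w) k) = Cl i k.
  move=> Hi Hk; rewrite HR !nth_rows // fold_gram ?unit_in //.
  have Hi' : i \in iota 0 6 by rewrite mem_iota.
  apply/eqP; have /allP := allP gram_units i Hi'.
  by apply; rewrite mem_iota.
have Reps k (j : 'I_2) : (k < 6)%N ->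
    ((fL j (nth [::] (rowsl w) k) - fL j (unitL k)) %% 3 == 0)%Z.
  move=> Hk; have := He (delta_mx 0 (Ordinal Hk)).
  rewrite /act !epsE => /eps_eqP /(_ j).
  by rewrite rowl_delta_mul rowl_delta.
have Hk k : (k <= 6)%N -> take k (rowsl w) \in extk k.
  elim: k => [|k IH] Hk6; first by rewrite take0 inE.
  rewrite (take_nth [::]) ?sizeR //=.
  apply: mem_extS; first by apply: IH; apply: ltnW.
    by apply: Rin.
  apply/and3P; split.
  - exact: (Reps k (@Ordinal 2 0 isT)).
  - exact: (Reps k (@Ordinal 2 1 isT)).
  apply/allP => i; rewrite mem_iota => /andP [_ Hi].
  by rewrite nth_take // Rgram // (ltn_trans Hi).
rewrite solsE mem_filter v_inv //; last by exists s.
have H6 := Hk 6%N isT.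
rewrite take_oversize in H6; last by rewrite sizeR.
by rewrite sols0E.
Qed.

Lemma mxL_sols L : L \in sols -> rowsl (mxL L) = L.
Proof. by move=> H; rewrite rowsl_mxL; apply/eqP; exact: (allP sols_shape L H). Qed.

Lemma fold_inord (s : seq nat) l : all (fun j => j < 6)%N s ->
  foldl stp l (map (@inord 5) s) = foldl step l s.
Proof.
elim: s l => //= j s IH l /andP [Hj Hs].
by rewrite IH // /stp inordK.
Qed.

Lemma Sc (c : int) (v : charX) : c *: v = v *~ c.
Proof. by rewrite -scaler_int intz. Qed.

Lemma sols_Weps L : L \in sols -> Weps eps (mxL L).
Proof.
move=> HL; split.
  have := HL; rewrite -(eqP words_ok) => /mapP [s Hs EL].
  exists (map (@inord 5) s); apply: rowsl_inj.
  rewrite rowsl_prod mxL_sols // EL /rows_of_word.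
  apply: eq_map => i; symmetry; apply: fold_inord.
  exact: (allP words_small s Hs).
move=> x; rewrite /act !epsE.
rewrite (mulmx_sum_row x) [in RHS](row_sum_delta x) !raddf_sum.
apply: eq_bigr => i _; rewrite !Sc !raddfMz; congr (_ *~ _).
apply: eps_eqI => j; rewrite rowE rowl_delta_mul mxL_sols // rowl_delta.
have Hi : (i : nat) \in iota 0 6 by rewrite mem_iota /=.
have /allP := allP sols_eps L HL; move=> /(_ i Hi) /allP; apply.
by rewrite mem_iota /=.
Qed.

Definition sW := map mxL sols.

Lemma sW_uniq : uniq sW.
Proof.
rewrite map_inj_in_uniq ?sols_uniq // => L1 L2 H1 H2 E.
by rewrite -(mxL_sols L1 H1) -(mxL_sols L2 H2) E.
Qed.

Lemma sW_mem w : Weps eps w <-> w \in sW.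
Proof.
split=> [H | /mapP [L HL ->]]; last exact: sols_Weps.
by rewrite -(mxL_rowsl w); apply: map_f; exact: Weps_sols.
Qed.

Lemma t27 : (27`_3 = 27)%N.
Proof. by rewrite p_part. Qed.

Lemma Sylow_all P : is_Sylow 3 (Weps eps) P -> forall w, Weps eps w -> P w.
Proof.
case=> [[HPW _ _ _] [nG [nP [[sG [uG szG HG]] [sP [uP szP HP]] EnP]]]].
have EG : sG =i sW by move=> x; apply/idP/idP => H; [apply/sW_mem/HG | apply/HG/sW_mem].
have nG27 : nG = 27%N by rewrite -szG (perm_size (uniq_perm uG sW_uniq EG)) size_map sols_size.
have nP27 : size sP = 27%N by rewrite szP EnP nG27 t27.
have sub : {subset sP <= sW} by move=> x /HP /HPW /sW_mem.
have le : (size sW <= size sP)%N by rewrite nP27 size_map sols_size.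
have [_ E] := uniq_min_size uP sub le.
by move=> w /sW_mem; rewrite -E => /HP.
Qed.

Lemma fix0 (x : charX) : x *m mxL G1 = x -> x *m mxL G2 = x -> x = 0.
Proof.
move=> /(congr1 rowl) h1 /(congr1 rowl) h2.
rewrite rowl_mul rowsl_mxL in h1; rewrite rowl_mul rowsl_mxL in h2.
apply: rowl_inj.
move: h1 h2; rewrite /rowl /= !mxE /=.
move: (x 0 o0) (x 0 o1) (x 0 o2) (x 0 o3) (x 0 o4) (x 0 o5) => a0 a1 a2 a3 a4 a5.
case=> e0 e1 e2 e3 e4 e5; case=> f0 f1 f2 f3 f4 f5.
rewrite /dot6 /= in e0 e1 e2 e3 e4 e5 f0 f1 f2 f3 f4 f5.
congr [:: _; _; _; _; _; _]; lia.
Qed.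

Lemma in_sols L : L \in [:: G1; G2; K1_0; K1_1; K1_2; K1_3; K1_4; K1_5; K2_0; K2_1; K2_2; K2_3; K2_4; K2_5] ->
  L \in sols.
Proof. exact: (allP gens_in). Qed.

Definition K1s := [:: K1_0; K1_1; K1_2; K1_3; K1_4; K1_5].
Definition K2s := [:: K2_0; K2_1; K2_2; K2_3; K2_4; K2_5].

Lemma K1_uniq a : (fL 0 (rowl a) %% 3 != 0)%Z -> uniq (map (vm (rowl a)) K1s).
Proof.
rewrite /rowl /=.
move: (a 0 o0) (a 0 o1) (a 0 o2) (a 0 o3) (a 0 o4) (a 0 o5) => a0 a1 a2 a3 a4 a5.
rewrite /fL /= => H.
rewrite /= !inE !negb_or /dot6 /=.
repeat (apply/andP; split); rewrite ?eqseq_cons ?eqxx /dot6 /= ?andbT; lia.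
Qed.

Lemma K2_uniq a : (fL 0 (rowl a) %% 3 == 0)%Z -> (fL 1 (rowl a) %% 3 != 0)%Z ->
  uniq (map (vm (rowl a)) K2s).
Proof.
rewrite /rowl /=.
move: (a 0 o0) (a 0 o1) (a 0 o2) (a 0 o3) (a 0 o4) (a 0 o5) => a0 a1 a2 a3 a4 a5.
rewrite /fL /= => H H'.
rewrite /= !inE !negb_or /dot6 /=.
repeat (apply/andP; split); rewrite ?eqseq_cons ?eqxx /dot6 /= ?andbT; lia.
Qed.

Lemma zmod_id (V : zmodType) (a b c z : V) : a + c - z - (b + c - z) = a - b.
Proof. by rewrite opprB addrA subrK [b + c]addrC addrKA. Qed.

Lemma count3 (cl : charX -> int) (t : seq charX) :
  (forall r, cl r = 0 \/ cl r = 1 \/ cl r = 2) ->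
  size t = (count (fun r => cl r == 0) t + count (fun r => cl r == 1) t
            + count (fun r => cl r == 2) t)%N.
Proof.
move=> Hc; elim: t => //= r t IH.
by case: (Hc r) => [->|[->|->]]; rewrite IH /=; lia.
Qed.

Lemma no_index (A : seq charX) (psi : charX -> int) (e : charX) :
  (forall x y, psi (x + y) = psi x + psi y) ->
  (forall x n, psi (x *~ n) = psi x * n) ->
  (forall a, a \in A -> (psi a %% 3 = 0)%Z) ->
  (psi e %% 3 != 0)%Z -> ~ finite_index_prime_to A 3.
Proof.
move=> Hadd Hmul HA He [s [us Hcov Hirr Hcop]].
have psi0 : psi 0 = 0 by have := Hadd 0 0; rewrite addr0; lia.
have Hsub x y : psi (x - y) = psi x - psi y by have := Hadd (x - y) y; rewrite subrK; lia.
have Hspan v : in_span A v -> (psi v %% 3 = 0)%Z.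
  case=> c ->; rewrite (big_morph psi Hadd psi0); apply/dvdz_mod0P.
  apply: rpred_sum => i _; rewrite Hmul; apply: dvdz_mulr; apply/dvdz_mod0P.
  by apply: HA; exact: mem_nth.
have span_sub u v : in_span A u -> in_span A v -> in_span A (u - v).
  case=> c ->; case=> c' ->; exists (fun i => c i - c' i).
  by rewrite -sumrB; apply: eq_bigr => i _; rewrite mulrzBr.
have fP : forall r : charX, {r' | r' \in s /\ in_span A (r + e - r')}.
  move=> r; apply: constructive_indefinite_description.
  by case: (Hcov (r + e)) => r' H1 H2; exists r'.
pose f r := proj1_sig (fP r).
have fs r : f r \in s by case: (proj2_sig (fP r)).
have fspan r : in_span A (r + e - f r) by case: (proj2_sig (fP r)).
have fpsi r : modz (psi (f r)) 3 = modz (modz (psi r) 3 + modz (psi e) 3) 3.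
  by have := Hspan _ (fspan r); rewrite !Hsub Hadd; lia.
have finj : {in s &, injective f}.
  move=> r1 r2 H1 H2 E; apply: Hirr => //.
  by have := span_sub _ _ (fspan r1) (fspan r2); rewrite E zmod_id.
pose cl r := modz (psi r) 3.
pose cnt c := count (fun r => cl r == c) s.
have Hle c : (cnt c <= cnt (modz (c + modz (psi e) 3) 3))%N.
  rewrite /cnt -!size_filter -(size_map f).
  apply: uniq_leq_size.
    rewrite map_inj_in_uniq ?filter_uniq //.
    by move=> x y; rewrite !mem_filter => /andP [_ Hx] /andP [_ Hy]; exact: finj.
  move=> y /mapP [r]; rewrite mem_filter => /andP [/eqP Hr Hrs] ->.
  by rewrite mem_filter fs andbT /cl fpsi -Hr.
have Hc r : cl r = 0 \/ cl r = 1 \/ cl r = 2 by rewrite /cl; lia.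
have Hsum : size s = (cnt 0 + cnt 1 + cnt 2)%N by exact: (@count3 cl s Hc).
have [Hd | Hd] : modz (psi e) 3 = 1 \/ modz (psi e) 3 = 2 by lia.
- have h0 := Hle 0; have h1 := Hle 1; have h2 := Hle 2.
  rewrite Hd in h0 h1 h2.
  have E1 : modz (0 + 1) 3 = 1 by [].
  have E2 : modz (1 + 1) 3 = 2 by [].
  have E3 : modz (2 + 1) 3 = 0 by [].
  rewrite E1 in h0; rewrite E2 in h1; rewrite E3 in h2.
  have Hs : size s = (cnt 0 * 3)%N.
    by move: h0 h1 h2 Hsum; move: (cnt 0) (cnt 1) (cnt 2) => n0 n1 n2; lia.
  by move: Hcop; rewrite Hs /coprime gcdnC gcdnMl.
- have h0 := Hle 0; have h1 := Hle 1; have h2 := Hle 2.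
  rewrite Hd in h0 h1 h2.
  have E1 : modz (0 + 2) 3 = 2 by [].
  have E2 : modz (1 + 2) 3 = 0 by [].
  have E3 : modz (2 + 2) 3 = 1 by [].
  rewrite E1 in h0; rewrite E2 in h1; rewrite E3 in h2.
  have Hs : size s = (cnt 0 * 3)%N.
    by move: h0 h1 h2 Hsum; move: (cnt 0) (cnt 1) (cnt 2) => n0 n1 n2; lia.
  by move: Hcop; rewrite Hs /coprime gcdnC gcdnMl.
Qed.

Definition p0 : 'I_2 := @Ordinal 2 0 isT.
Definition p1 : 'I_2 := @Ordinal 2 1 isT.
Definition psiF (j : 'I_2) (x : charX) : int := (x *m Fm) 0 j.
Lemma psiF_add j x y : psiF j (x + y) = psiF j x + psiF j y.
Proof. by rewrite /psiF mulmxDl mxE. Qed.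
Lemma psiF_mul j x n : psiF j (x *~ n) = psiF j x * n.
Proof. by rewrite /psiF -scaler_int intz -scalemxAl mxE mulrC. Qed.
Lemma psiFE j x : psiF j x = fL j (rowl x).
Proof. exact: FmE. Qed.

Definition bigl := [:: G1; G2; K1_0; K1_1; K1_2; K1_3; K1_4; K1_5; K2_0; K2_1; K2_2; K2_3; K2_4; K2_5].
Lemma K1sub : {subset K1s <= sols}.
Proof.
have h : all (fun L => L \in bigl) K1s by vm_compute.
by move=> L HL; apply: in_sols; exact: (allP h L HL).
Qed.
Lemma K2sub : {subset K2s <= sols}.
Proof.
have h : all (fun L => L \in bigl) K2s by vm_compute.
by move=> L HL; apply: in_sols; exact: (allP h L HL).
Qed.

Lemma orbit_gen a Ks : {subset Ks <= sols} -> uniq (map (vm (rowl a)) Ks) ->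
  uniq [seq a *m mxL L | L <- Ks].
Proof.
move=> Hsub Hu; apply: (@map_uniq _ _ rowl); rewrite -map_comp.
rewrite (@eq_in_map _ _ (rowl \o (fun L => a *m mxL L)) (vm (rowl a)) Ks).1 //.
by move=> L HL /=; rewrite rowl_mul mxL_sols //; exact: Hsub.
Qed.

Lemma rank12 P : is_Sylow 3 (Weps eps) P -> forall A : seq charX,
    (forall a w, a \in A -> P w -> act w a \in A) ->
    finite_index_prime_to A 3 -> (12 <= size (undup A))%N.
Proof.
move=> HS A Hinv Hfin.
have PW := @Sylow_all P HS.
have inA a L : a \in A -> L \in sols -> a *m mxL L \in A.
  by move=> Ha HL; apply: (Hinv a (mxL L) Ha); apply: PW; exact: sols_Weps.
have [a1 Ha1 H1] : exists2 a1, a1 \in A & (fL 0 (rowl a1) %% 3 != 0)%Z.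
  apply/hasP; apply/negPn/negP => /hasPn Hn.
  apply: (@no_index A (psiF p0) (delta_mx 0 o3) (psiF_add p0) (psiF_mul p0) _ _ Hfin).
  - by move=> a Ha; apply/eqP; rewrite psiFE; have := Hn a Ha; rewrite negbK.
  - by rewrite psiFE rowl_delta.
pose psi x := fL 1 (rowl a1) * psiF p0 x - fL 0 (rowl a1) * psiF p1 x.
have psi_add x y : psi (x + y) = psi x + psi y by rewrite /psi !psiF_add; ring.
have psi_mul x n : psi (x *~ n) = psi x * n by rewrite /psi !psiF_mul; ring.
have [a2 Ha2 H2] : exists2 a2, a2 \in A & (psi a2 %% 3 != 0)%Z.
  apply/hasP; apply/negPn/negP => /hasPn Hn.
  apply: (@no_index A psi (delta_mx 0 o0) psi_add psi_mul _ _ Hfin).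
  - by move=> a Ha; apply/eqP; have := Hn a Ha; rewrite negbK.
  - rewrite /psi !psiFE rowl_delta.
    have -> : fL p0 (unitL o0) = 0 by [].
    have -> : fL p1 (unitL o0) = 1 by [].
    rewrite mulr0 mulr1 sub0r; move: H1; move: (fL 0 (rowl a1)) => t; lia.
have [Ks2 [Ks2sub [U2 sz2]]] : exists Ks2, [/\ {subset Ks2 <= sols},
    uniq [seq a2 *m mxL L | L <- Ks2] & size Ks2 = 6%N].
  case: (boolP (fL 0 (rowl a2) %% 3 == 0)%Z) => Hf0.
  - exists K2s; split => //; first exact: K2sub.
    apply: orbit_gen; first exact: K2sub.
    apply: K2_uniq => //; apply/negP => Hf1.
    move: H2; rewrite /psi !psiFE; apply/negP/negPn; apply/eqP/dvdz_mod0P.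
    by apply: rpredB; apply: dvdz_mull; apply/dvdz_mod0P/eqP.
  - exists K1s; split => //; first exact: K1sub.
    by apply: orbit_gen; [exact: K1sub | exact: K1_uniq].
pose O1 := [seq a1 *m mxL L | L <- K1s].
pose O2 := [seq a2 *m mxL L | L <- Ks2].
have U1 : uniq O1 by apply: orbit_gen; [exact: K1sub | exact: K1_uniq].
have D : ~~ has (mem O1) O2.
  apply/hasPn => x /mapP [L2 HL2 ->]; apply/negP => /mapP [L1 HL1 E].
  have e1 := (sols_Weps L1 (K1sub L1 HL1)).2 a1.
  have e2 := (sols_Weps L2 (Ks2sub L2 HL2)).2 a2.
  rewrite /act !epsE in e1 e2.
  have E12 : epsf a1 = epsf a2 by rewrite -e1 -e2 E.
  have h0 := eps_eqP _ _ E12 p0; have h1 := eps_eqP _ _ E12 p1.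
  move: H2; rewrite /psi !psiFE; apply/negP/negPn; apply/eqP/dvdz_mod0P.
  have -> : fL 1 (rowl a1) * fL p0 (rowl a2) - fL 0 (rowl a1) * fL p1 (rowl a2) =
     fL 0 (rowl a1) * (fL p1 (rowl a1) - fL p1 (rowl a2))
     - fL 1 (rowl a1) * (fL p0 (rowl a1) - fL p0 (rowl a2)) by rewrite /=; ring.
  by apply: rpredB; apply: dvdz_mull; apply/dvdz_mod0P/eqP.
have U : uniq (O1 ++ O2) by rewrite cat_uniq U1 D U2.
have sub : {subset O1 ++ O2 <= undup A}.
  move=> x; rewrite mem_cat mem_undup => /orP [] /mapP [L HL ->]; apply: inA => //.
  - exact: K1sub.
  - exact: Ks2sub.
have := uniq_leq_size U sub.
by rewrite size_cat !size_map sz2.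
Qed.

Lemma Fcast (a : 'F_3) : ((a : nat)%:Z)%:~R = a.
Proof. by rewrite -pmulrn natr_Zp. Qed.

Theorem proposition17p1 :
  exists eps : {additive 'rV[int]_6 -> 'rV['F_3]_2},
    [/\ forall y : 'rV['F_3]_2, exists x : charX, eps x = y,
        forall a : charX, is_root a -> eps a != 0,
        forall P, is_Sylow 3 (Weps eps) P ->
          forall x : charX, (forall w, P w -> act w x = x) -> x = 0
      & Rank_ge (Weps eps) 3 12].
Proof.
exists eps; split.
- move=> y.
  exists (\row_k (if k == o3 then ((y 0 p0 : nat)%:Z) else if k == o0 then ((y 0 p1 : nat)%:Z) else 0)).
  rewrite epsE; apply/rowP => j; rewrite eps_entry /rowl /= !mxE /=.
  case: j => [[|[|//]] Hj]; rewrite /fL /= ?add0r ?addr0 Fcast; congr (y 0 _); exact: val_inj.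
- move=> a [w [i [[s Ew] ->]]].
  have Hr : rowl (act w (simple_root i)) \in Rl.
    by rewrite /act /simple_root Ew rowl_prod rowl_delta fold_Rl ?unit_in.
  apply/eqP => H0.
  have H0' : epsf (act w (simple_root i)) = epsf 0 by rewrite -epsE H0 raddf0.
  have h0 := eps_eqP _ _ H0' p0; have h1 := eps_eqP _ _ H0' p1.
  have Z0 : rowl (0 : charX) = [:: 0; 0; 0; 0; 0; 0] by rewrite /rowl /= !mxE.
  rewrite Z0 in h0 h1.
  have := allP eps_roots _ Hr; move: h0 h1.
  move: (rowl (act w (simple_root i))) => r; rewrite /fL /=; lia.
- move=> P HS x Hx; apply: fix0; apply: Hx; apply: (@Sylow_all P HS); apply: sols_Weps; apply: in_sols.
  + exact: mem_head.
  + by rewrite in_cons mem_head orbT.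
- exact: rank12.
Qed.
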